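(* Let $\delta,\xi\in(0,1/2)$, $\lambda\in(0,1/2)$, let $n$ be a positive integer and $M=2^{n(C-\xi)}$ an integer. Suppose $\{(\mathbf u_k,\mathcal E_k):k=1,\dots,M\}$ is a transmission code with distinct $\mathbf u_k\in\mathcal X^n$, pairwise disjoint $\mathcal E_k\subseteq\mathcal Y^n$, and $W(\mathcal E_k^c\mid\mathbf u_k)\le\delta$ for all $k$; let $\mathcal Z=\{\mathbf u_1,\dots,\mathbf u_M\}$. Let $\epsilon$ satisfy $\frac16>\epsilon\ge 2^{-n(C-\xi)}$, let $M'=\lceil\epsilon M\rceil$, and let $m$ be a positive integer with $2^m\le \binom{M'}{\lceil\lambda M'\rceil}^{-1}M'^{-1}\left(\frac{1-\epsilon}{2\epsilon}\right)^{\lceil\lambda M'\rceil}$. Let $(A_i)_{i\in\{0,1\}^m}$ be subsets of $\mathcal Z$ with $|A_i|=M'$ and $|A_i\cap A_{i'}|<\lambda M'$ for $i\ne i'$. Define the encoder $Q_i(\mathbf x)=\mathbf 1_{\mathbf x\in A_i}/|A_i|$ for $i\in\{0,1\}^m$ and, for each $f\in\mathcal F_m^{\mathrm W}(\le S)$, the decoding set $\mathcal D_f=\bigcup_{k:\,\mathbf u_k\in B_f}\mathcal E_k$ where $B_f=\bigcup_{\ell\in f^{-1}[1]}A_\ell$. Then this is an $(n,m,\mathcal F_m^{\mathrm W}(\le S),\lambda_1,\lambda_2)$ BFC code with $\lambda_1=\delta$ and $\lambda_2=S\lambda+\delta$.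
   Context: A channel with input alphabet $\mathcal X$ and output alphabet $\mathcal Y$ is given by conditional distributions $W(\cdot\mid x^n)$ on $\mathcal Y^n$; $C$ is its Shannon capacity. $\mathcal F_m$ is the set of all Boolean functions $\{0,1\}^m\to\{0,1\}$ and $\mathcal F_m^{\mathrm W}(\le S)=\{f\in\mathcal F_m:|f^{-1}[1]|\le S\}$. For $\mathcal F\subseteq\mathcal F_m$, an $(n,m,\mathcal F,\lambda_1,\lambda_2)$ BFC code consists of probability distributions $Q_i$ on $\mathcal X^n$ ($i\in\{0,1\}^m$) and sets $D_f\subseteq\mathcal Y^n$ ($f\in\mathcal F$) such that for all $i,f$: if $f(i)=1$ then $Q_iW(D_f^c)\le\lambda_1$, and if $f(i)=0$ then $Q_iW(D_f)\le\lambda_2$, where $QW(D)=\sum_xQ(x)W(D\mid x)$. *)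

(* Defs.v *)
From HB Require Import structures.
From mathcomp Require Import all_boot all_order all_algebra.
From mathcomp Require Import reals exp.
Set Implicit Arguments. Unset Strict Implicit. Unset Printing Implicit Defensive.
Import Order.TTheory GRing.Theory Num.Theory.
Local Open Scope ring_scope.

(* A channel: for every blocklength n, a stochastic matrix
   W n x y = W(y | x) with x in X^n, y in Y^n. *)
Definition channel (R : realType) (X Y : finType) :=
  forall n : nat, n.-tuple X -> n.-tuple Y -> R.

Definition is_channel (R : realType) (X Y : finType) (W : channel R X Y) :=
  forall n (x : n.-tuple X),
    (forall y, 0 <= W n x y) /\ \sum_(y : n.-tuple Y) W n x y = 1.

Definition Wset (R : realType) (X Y : finType) (W : channel R X Y) n
  (D : {set n.-tuple Y}) (x : n.-tuple X) : R :=
  \sum_(y in D) W n x y.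

Definition QW (R : realType) (X Y : finType) (W : channel R X Y) n
  (Q : n.-tuple X -> R) (D : {set n.-tuple Y}) : R :=
  \sum_(x : n.-tuple X) Q x * Wset W D x.

Definition is_transmission_code (R : realType) (X Y : finType)
  (W : channel R X Y) n M (u : 'I_M -> n.-tuple X)
  (E : 'I_M -> {set n.-tuple Y}) (d : R) :=
  (forall k k', k != k' -> [disjoint E k & E k']) /\
  (forall k, Wset W (~: E k) (u k) <= d).

Definition achievable_rate (R : realType) (X Y : finType) (W : channel R X Y)
  (r : R) :=
  forall d : R, 0 < d -> exists N : nat, forall n : nat, (N <= n)%N ->
    exists M : nat, exists u : 'I_M -> n.-tuple X,
    exists E : 'I_M -> {set n.-tuple Y},
      2 `^ (n%:R * r) <= M%:R /\ is_transmission_code W u E d.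

Definition is_capacity (R : realType) (X Y : finType) (W : channel R X Y)
  (C : R) :=
  (forall r, achievable_rate W r -> r <= C) /\
  (forall c, (forall r, achievable_rate W r -> r <= c) -> C <= c).

Definition is_distribution (R : realType) (T : finType) (Q : T -> R) :=
  (forall x, 0 <= Q x) /\ \sum_x Q x = 1.

Definition boolfun (m : nat) := {ffun m.-tuple bool -> bool}.

Definition weight_le (m S : nat) : pred (boolfun m) :=
  fun f => (#|[set i | f i]| <= S)%N.
Arguments weight_le : clear implicits.

Definition is_BFC_code (R : realType) (X Y : finType) (W : channel R X Y)
  (n m : nat) (F : pred (boolfun m))
  (Q : m.-tuple bool -> n.-tuple X -> R) (D : boolfun m -> {set n.-tuple Y})
  (l1 l2 : R) :=
  (forall i, is_distribution (Q i)) /\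
  (forall i f, F f ->
     (f i -> QW W (Q i) (~: D f) <= l1) /\
     (~~ f i -> QW W (Q i) (D f) <= l2)).

(* Main.v *)
Require Import Defs.
From HB Require Import structures.
From mathcomp Require Import all_boot all_order all_algebra.
From mathcomp Require Import reals exp.
From mathcomp Require Import ring.
Import Order.TTheory GRing.Theory Num.Theory.
Local Open Scope ring_scope.

Section H.
Set Implicit Arguments.
Variables (R : realType) (X Y : finType) (W : channel R X Y).
Hypothesis HW : is_channel W.

Lemma Wset_ge0 n D x : 0 <= @Wset R X Y W n D x.
Proof. by apply: sumr_ge0 => y _; case: (HW x). Qed.

Lemma Wset_sub n (D D' : {set n.-tuple Y}) x : D \subset D' ->
  Wset W D x <= Wset W D' x.
Proof.
move=> sub; rewrite /Wset [X in _ <= X](bigID (fun y => y \in D)) /=.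
have -> : \sum_(i in D' | i \in D) W x i = \sum_(i in D) W x i.
  by apply: eq_bigl => y; case yD: (y \in D); rewrite ?andbT ?andbF //= (subsetP sub).
by rewrite lerDl; apply: sumr_ge0 => y _; case: (HW x).
Qed.

Lemma Wset_le1 n D x : @Wset R X Y W n D x <= 1.
Proof.
case: (HW x) => _ <-; have := @Wset_sub _ D _ x (subsetT D).
by rewrite /Wset; under [X in _ <= X -> _]eq_bigl do rewrite inE.
Qed.

Lemma QW_eq n (A : {set n.-tuple X}) c D :
  QW W (fun x => if x \in A then c else 0) D = \sum_(x in A) c * Wset W D x.
Proof.
rewrite /QW [RHS]big_mkcond; apply: eq_bigr => x _.
by case: ifP => _; rewrite ?mul0r.
Qed.

Lemma QW_le n (A : {set n.-tuple X}) D (g : n.-tuple X -> R) :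
  (forall x, x \in A -> Wset W D x <= g x) ->
  QW W (fun x => if x \in A then (#|A|%:R)^-1 else 0) D <=
  (#|A|%:R)^-1 * \sum_(x in A) g x.
Proof.
move=> H; rewrite QW_eq mulr_sumr; apply: ler_sum => x xA.
by rewrite ler_wpM2l ?invr_ge0 ?ler0n // H.
Qed.
End H.

Theorem lemma3 (R : realType) (X Y : finType) (W : channel R X Y) (C : R)
  (delta xi lambda eps : R) (n M M' L m S : nat)
  (u : 'I_M -> n.-tuple X) (E : 'I_M -> {set n.-tuple Y})
  (A : m.-tuple bool -> {set n.-tuple X}) :
  is_channel W -> is_capacity W C ->
  0 < delta < 1/2 -> 0 < xi < 1/2 -> 0 < lambda < 1/2 ->
  (0 < n)%N ->
  M%:R = 2 `^ (n%:R * (C - xi)) ->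
  injective u -> is_transmission_code W u E delta ->
  eps < 1/6 -> 2 `^ (- (n%:R * (C - xi))) <= eps ->
  (M' : int) = Num.ceil (eps * M%:R) ->
  (L : int) = Num.ceil (lambda * M'%:R) ->
  (0 < m)%N ->
  2 ^+ m <= ('C(M', L)%:R)^-1 * (M'%:R)^-1 * ((1 - eps) / (2 * eps)) ^+ L ->
  (forall i, A i \subset [set u k | k : 'I_M]) ->
  (forall i, #|A i| = M') ->
  (forall i i', i != i' -> #|A i :&: A i'|%:R < lambda * M'%:R) ->
  is_BFC_code W (weight_le m S)
    (fun i x => if x \in A i then (#|A i|%:R)^-1 else 0)
    (fun f => \bigcup_(k : 'I_M | u k \in \bigcup_(l | f l) A l) E k)
    delta (S%:R * lambda + delta).
Proof.
move=> HW _ /andP[d0 _] _ /andP[lam0 _] _ HM uinj [Edis Eerr] _ Heps HM' _ _ _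
  Asub Acard Aint.
have M'pos : (0 < M')%N.
  have Mpos : 0 < (M%:R : R) by rewrite HM powR_gt0.
  have : 1 <= eps * M%:R.
    by rewrite -(ler_pdivrMr _ _ Mpos) div1r HM -powRN.
  move=> h; have := ceil_ge (eps * M%:R); rewrite -HM' => h2.
  have : (1 : R) <= (M' : int)%:~R by apply: le_trans h h2.
  by rewrite ler1z -[(1 : int)]/(1%:Z) lez_nat.
have cardA i : (#|A i|%:R : R) != 0 by rewrite Acard pnatr_eq0 -lt0n.
split.
  move=> i; split; first by move=> x; case: ifP => _ //; rewrite invr_ge0 ler0n.
  rewrite -big_mkcond /= sumr_const; set c := _^-1; rewrite -mulr_natr /c mulVf //.
move=> i f Sf; split.
- move=> fi.
  apply: (le_trans (@QW_le _ _ _ W _ (A i) _ (fun _ => delta) _)).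
    move=> x xA; case/imsetP: (subsetP (Asub i) x xA) => k _ xk; rewrite xk in xA *.
    apply: le_trans (Eerr k); apply: Wset_sub => //.
    apply/subsetP => y; rewrite !inE; apply: contra => yE.
    apply/bigcupP; exists k => //; apply/bigcupP; exists i => //.
  rewrite sumr_const; set c := _^-1; by rewrite -mulr_natr mulrCA /c mulVf // mulr1.
- move=> nfi.
  set B := \bigcup_(l | f l) A l.
  apply: (le_trans (@QW_le _ _ _ W _ (A i) _ (fun x => (x \in B)%:R + delta) _)).
    move=> x xA; case/imsetP: (subsetP (Asub i) x xA) => k _ xk; rewrite xk.
    case xB: (u k \in B).
      by apply: le_trans (Wset_le1 HW _ _) _; rewrite lerDl ltW.
    rewrite add0r; apply: le_trans (Eerr k); apply: Wset_sub => //.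
    apply/subsetP => y; rewrite inE => /bigcupP [k' uk'B yE'].
    apply/negP => yE.
    have kk' : k != k' by apply: contraFneq xB => ->.
    have := Edis _ _ kk'; rewrite disjoint_subset => /subsetP/(_ y yE).
    by rewrite inE yE'.
  rewrite big_split /= sumr_const mulrDr Acard.
  set c := _^-1.
  have cpos : 0 < c by rewrite /c invr_gt0 ltr0n.
  have h1 : \sum_(x in A i) ((x \in B)%:R : R) <=
            \sum_(l in [set l | f l]) (lambda * M'%:R).
    apply: (@le_trans _ _ (\sum_(x in A i) \sum_(l in [set l | f l]) ((x \in A l)%:R : R))).
      apply: ler_sum => x _; case xB: (x \in B); last first.
        by apply: sumr_ge0 => l _; rewrite ler0n.
      case/bigcupP: xB => l fl xl.
      rewrite (bigD1 l) ?inE //= xl lerDl.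
      by apply: sumr_ge0 => l' _; rewrite ler0n.
    rewrite exchange_big /=; apply: ler_sum => l; rewrite inE => fl.
    have il : i != l by apply: contraNneq nfi => ->.
    apply: le_trans (ltW (Aint _ _ il)).
    rewrite (eq_bigr (fun x => if x \in A l then 1 else 0)); last by move=> x _; case: (x \in A l).
    rewrite -big_mkcondr /=.
    rewrite (eq_bigl (fun x => x \in A i :&: A l)); last by move=> x; rewrite inE.
    by rewrite sumr_const.
  apply: lerD.
    apply: le_trans (ler_wpM2l (ltW cpos) h1) _.
    have M'0 : (M'%:R : R) != 0 by rewrite pnatr_eq0 -lt0n.
    rewrite sumr_const -[X in c * X]mulr_natr.
    have -> : c * (lambda * M'%:R * #|[set l | f l]|%:R) = #|[set l | f l]|%:R * lambda.
      by rewrite /c; field.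
    by rewrite ler_wpM2r ?(ltW lam0) // ler_nat.
  by rewrite -mulr_natr mulrCA /c mulVf ?pnatr_eq0 -?lt0n // mulr1.
Qed.
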